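(* Let $X$ be a topological space and $p \in X$. If $X$ is productively countably tight at $p$, then $\mathsf{S}_1(\Omega_p, \Omega_p)$ holds, i.e., $X$ has countable strong fan tightness at $p$: for every sequence $(A_n)_{n \in \omega}$ of elements of $\Omega_p$ one can select $a_n \in A_n$ such that $\{a_n : n \in \omega\} \in \Omega_p$.
   Context: For a point $p$ of a space $X$, $\Omega_p$ denotes the collection of all sets $A \subset X$ such that $p \notin A$ and $p \in \overline{A}$. A space $Y$ has countable tightness at $y \in Y$ if whenever $y \in \overline{A}$ there is a countable $B \subset A$ with $y \in \overline{B}$. $X$ is productively countably tight at $p$ if for every space $Y$ and every $y \in Y$ such that $Y$ has countable tightness at $y$, the product $X \times Y$ has countable tightness at $\langle p, y\rangle$. *)

(* Defs.v *)
From HB Require Import structures.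
From mathcomp Require Import all_boot all_order.
From mathcomp Require Import all_classical.
From mathcomp Require Import topology.
Set Implicit Arguments. Unset Strict Implicit. Unset Printing Implicit Defensive.
Local Open Scope classical_set_scope.

Definition Omega_at (X : topologicalType) (p : X) : set (set X) :=
  [set A | ~ A p /\ closure A p].

Definition countably_tight_at (Y : topologicalType) (y : Y) : Prop :=
  forall A : set Y, closure A y ->
    exists B : set Y, [/\ B `<=` A, countable B & closure B y].

Definition productively_countably_tight_at (X : topologicalType) (p : X) : Prop :=
  forall (Y : topologicalType) (y : Y),
    countably_tight_at y -> countably_tight_at ((p, y) : (X * Y)%type).

Definition S1_Omega (X : topologicalType) (p : X) : Prop :=
  forall A : nat -> set X, (forall n, Omega_at p (A n)) ->
    exists a : nat -> X, (forall n, A n (a n)) /\ Omega_at p (range a).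

(* Main.v *)
Require Import Defs.
From mathcomp Require Import all_boot all_classical topology.
From HB Require Import structures.
Set Implicit Arguments. Unset Strict Implicit. Unset Printing Implicit Defensive.
Local Open Scope classical_set_scope.
Definition fan := option ((nat -> nat) * nat).
HB.instance Definition _ := gen_eqMixin fan.
HB.instance Definition _ := gen_choiceMixin fan.

Definition fan_open (V : set fan) : Prop :=
  V None -> exists h : (nat -> nat) -> nat, forall s k, (h s <= k)%N -> V (Some (s, k)).

Lemma fan_openT : fan_open setT.
Proof. by move=> _; exists (fun _ => 0%N). Qed.

Lemma fan_openI : setI_closed fan_open.
Proof.
move=> A B oA oB [/oA [h1 H1] /oB [h2 H2]].
exists (fun s => maxn (h1 s) (h2 s)) => s k hk; split.
  by apply: H1; apply: leq_trans hk; exact: leq_maxl.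
by apply: H2; apply: leq_trans hk; exact: leq_maxr.
Qed.

Lemma fan_open_bigU (I : Type) (f : I -> set fan) :
  (forall i, fan_open (f i)) -> fan_open (\bigcup_i f i).
Proof.
move=> ofi [i _ fi]; have [h H] := ofi i fi.
by exists h => s k hk; exists i => //; apply: H.
Qed.

HB.instance Definition _ := isOpenTopological.Build fan fan_openT fan_openI fan_open_bigU.

Lemma fan_nbhsE (W : set fan) : nbhs (None : fan) W ->
  exists h : (nat -> nat) -> nat, W None /\ forall s k, (h s <= k)%N -> W (Some (s, k)).
Proof.
move=> [B [oB BN sBW]]; have [h H] := oB BN.
by exists h; split; [exact: sBW | move=> s k hk; apply: sBW; apply: H].
Qed.

Definition fanW (h : (nat -> nat) -> nat) : set fan :=
  fun y => match y with None => True | Some (s, k) => is_true (h s <= k)%N end.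

Lemma fan_nbhsI (h : (nat -> nat) -> nat) : nbhs (None : fan) (fanW h).
Proof. by exists (fanW h); split => // _; exists h. Qed.

Lemma fan_tight : countably_tight_at (None : fan).
Proof.
move=> A clA.
have [AN|AN] := pselect (A None).
  exists [set None]; split => //; first by move=> y ->.
  by apply: subset_closure; rewrite /set1 /=.
have [s Hs] : exists s, forall m, exists k, (m <= k)%N /\ A (Some (s, k)).
  apply/not_existsP => Hn.
  have Hb : forall s, exists m, forall k, (m <= k)%N -> ~ A (Some (s, k)).
    move=> s; have /existsNP [m Hm] := Hn s; exists m => k mk Ak.
    by apply: Hm; exists k.
  have [h Hh] := choice Hb.
  have [y [Ay Wy]] := clA _ (fan_nbhsI h).
  case: y Ay Wy => [[s' k]|] Ay Wy //.
  exact: Hh _ _ Wy Ay.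
exists [set y | A y /\ exists k, y = Some (s, k)]; split.
- by move=> y [].
- apply: (@card_le_trans _ _ _ ((fun k => Some (s, k) : fan) @` setT)).
    by apply: subset_card_le => y [_ [k ->]]; exists k.
  exact: card_image_le.
- move=> B /fan_nbhsE [h [_ Hh]].
  have [k [hk Ak]] := Hs (h s).
  by exists (Some (s, k)); split; [split => //; exists k | exact: Hh].
Qed.
Definition code (s : nat -> nat) (k : nat) : nat := pickle (mkseq s k).

Lemma code_inj s s' k k' : code s k = code s' k' ->
  k = k' /\ forall j, (j < k)%N -> s j = s' j.
Proof.
move=> /(pcan_inj (@pickleK_inv _)) E.
have kk : k = k' by rewrite -(size_mkseq s k) E size_mkseq.
split => // j jk; subst k'.
by rewrite -(nth_mkseq 0 s jk) E nth_mkseq.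
Qed.

Lemma merge_bound (rho : nat -> nat -> nat) (s : nat -> nat) (n : nat) :
  exists m, forall i', (i' < n)%N ->
  (exists j, rho i' j <> s j) -> forall k k', (m <= k)%N -> code (rho i') k' <> code s k.
Proof.
elim: n => [|n [m Hm]]; first by exists 0%N.
have [[j Hj]|Hn] := pselect (exists j, rho n j <> s j).
- exists (maxn m j.+1) => i' i'n Hd k k' mk E.
  move: i'n; rewrite ltnS leq_eqVlt => /orP [/eqP ei|i'n].
    subst i'; have [kk Hs] := code_inj E; subst k'.
    apply: Hj; apply: Hs; apply: leq_trans mk; exact: leq_maxr.
  by apply: (Hm i' i'n Hd k k') => //; apply: leq_trans mk; exact: leq_maxl.
- exists m => i' i'n Hd k k' mk E.
  move: i'n; rewrite ltnS leq_eqVlt => /orP [/eqP ei|i'n].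
    by subst i'; apply: Hn.
  exact: (Hm i' i'n Hd k k' mk E).
Qed.

Lemma merge_sel (rho : nat -> nat -> nat) : exists tau : nat -> nat,
  forall i, exists m, forall k, (m <= k)%N -> tau (code (rho i) k) = rho i (code (rho i) k).
Proof.
pose P (n : nat) : pred nat := fun i => `[< exists k, code (rho i) k = n >].
pose tau n := match pselect (exists i, P n i) with
  | left ex => rho (ex_minn ex) n | right _ => 0%N end.
exists tau => i.
have [m Hm] := merge_bound rho (rho i) i.
exists m => k mk.
rewrite /tau; case: pselect => [ex|nex]; last first.
  by exfalso; apply: nex; exists i; apply/asboolP; exists k.
case: ex_minnP => i0 /asboolP [k' Hk'] Hmin.
have i0i : (i0 <= i)%N by apply: Hmin; apply/asboolP; exists k.
have [[j Hj]|Hn] := pselect (exists j, rho i0 j <> rho i j).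
  move: i0i; rewrite leq_eqVlt => /orP [/eqP e|i0i].
    by subst i0; exfalso; apply: Hj.
  by exfalso; apply: (Hm i0 i0i (ex_intro _ j Hj) k k' mk Hk').
apply/eqP; apply/negPn/negP => /eqP H; apply: Hn; exists (code (rho i) k).
by [].
Qed.
Lemma nbhs_pair (X Y : topologicalType) (p : X) (y : Y) U W :
  nbhs p U -> nbhs y W -> nbhs ((p, y) : X * Y) (U `*` W).
Proof. by move=> nU nW; exists (U, W). Qed.

Lemma tight_X (X : topologicalType) (p : X) :
  productively_countably_tight_at p -> countably_tight_at p.
Proof.
move=> H A clA.
have cl2 : closure (A `*` [set (None : fan)]) ((p, None) : X * fan).
  move=> B [[U W] /= [nU nW] sB].
  have [x [Ax Ux]] := clA U nU.
  exists (x, None); split => //; apply: sB; split => //=.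
  exact: nbhs_singleton nW.
have [D [sD cD clD]] := H fan None fan_tight _ cl2.
exists (fst @` D); split.
- by move=> x [z Dz <-]; have [] := sD z Dz.
- apply: (@card_le_trans _ _ _ D) => //; exact: card_image_le.
- move=> U nU; have [z [Dz [Uz _]]] := clD _ (nbhs_pair nU (@filterT _ (nbhs (None : fan)) _)).
  by exists z.1; split => //; exists z.
Qed.

Lemma enum_countable (T : Type) (C : set T) : countable C -> C !=set0 ->
  exists e : nat -> T, C = e @` setT.
Proof.
move=> /pfcard_geP [->|/surjfunPex [e He]] [x Cx] //.
by exists e.
Qed.

Theorem theorem2p7 (X : topologicalType) (p : X) :
  productively_countably_tight_at p -> S1_Omega p.
Proof.
move=> H A HA.
have tX := tight_X H.
have He : forall n, exists e : nat -> X, (forall j, A n (e j)) /\ closure (range e) p.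
  move=> n; have [nA clA] := HA n.
  have [C [sC cC clC]] := tX _ clA.
  have [x [Cx _]] := clC _ (@filterT _ (nbhs p) _).
  have [e Ce] := enum_countable cC (ex_intro _ x Cx).
  exists e; split; first by move=> j; apply: sC; rewrite Ce; exists j.
  by rewrite -Ce.
have [e eP] := choice He.
pose S := [set z : X * fan | exists s k,
  z = (e (code s k) (s (code s k)), Some (s, k))].
have clS : closure S ((p, None) : X * fan).
  move=> B [[U W] /= [nU /fan_nbhsE [h [_ Wh]]] sB].
  have Hs : forall n, exists j, U (e n j).
    move=> n; have [_ /(_ U nU) [x [[j _ <-] Ux]]] := eP n.
    by exists j.
  have [s0 Hs0] := choice Hs.
  exists (e (code s0 (h s0)) (s0 (code s0 (h s0))), Some (s0, h s0)).
  split; first by exists s0, (h s0).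
  by apply: sB; split => //=; apply: Wh.
have [D [sD cD clD]] := H fan None fan_tight _ clS.
pose g (z : X * fan) : nat -> nat := match z.2 with Some (s, _) => s | None => fun=> 0%N end.
have cSp : countable (g @` D).
  apply: (@card_le_trans _ _ _ D) => //; exact: card_image_le.
have [z0 [Dz0 _]] := clD _ (@filterT _ (nbhs ((p, None) : X * fan)) _).
have [rho Hrho] := enum_countable cSp (ex_intro _ (g z0) (ex_intro2 _ _ z0 Dz0 erefl)).
have [tau Htau] := merge_sel rho.
exists (fun n => e n (tau n)); split.
  by move=> n; have [] := eP n.
split.
  by move=> [n _ En]; have [nA _] := HA n; apply: nA; rewrite -En; have [] := eP n.
move=> U nU.
have [s Hs] : exists s, forall m, exists k, (m <= k)%N /\
    D (e (code s k) (s (code s k)), Some (s, k)) /\ U (e (code s k) (s (code s k))).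
  apply/not_existsP => Hn.
  have Hb : forall s, exists m, forall k, (m <= k)%N ->
      ~ (D (e (code s k) (s (code s k)), Some (s, k)) /\ U (e (code s k) (s (code s k)))).
    move=> s; have /existsNP [m Hm] := Hn s; exists m => k mk HD.
    by apply: Hm; exists k.
  have [h Hh] := choice Hb.
  have [z [Dz [Uz Wz]]] := clD _ (nbhs_pair nU (fan_nbhsI h)).
  have [s [k zE]] := sD z Dz.
  rewrite zE /= in Dz Uz Wz.
  by apply: (Hh s k Wz); split.
have [k0 [_ [Dk0 _]]] := Hs 0%N.
have : (g @` D) s by exists (e (code s k0) (s (code s k0)), Some (s, k0)).
rewrite Hrho => -[i _ ris].
have [m Hm] := Htau i.
have [k [mk [_ Uk]]] := Hs m.
exists (e (code s k) (tau (code s k))); split; first by exists (code s k).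
by rewrite -ris Hm // ris.
Qed.
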